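(* Let $A=\mathbb C_w[x,x^{-1},y,y^{-1}]$. For each of the following six choices of elements $x',y'\in A$ and $w'(s,t)\in A$ ($s,t\in\mathbb Z$): (1) $x'=y$, $y'=x$, $w'(s,t)=w(t,s)^{-1}$; (2) $x'=x^{-1}$, $y'=y$, $w'(s,t)=w(1-s,t)^{-1}$; (3) $x'=x^{-1}$, $y'=x^{-1}y$, $w'(s,t)=w(1-s-t,t)^{-1}$; (4) $x'=x$, $y'=y^{-1}$, $w'(s,t)=w(s,1-t)^{-1}$; (5) $x'=x^{-1}$, $y'=y^{-1}$, $w'(s,t)=w(1-s,1-t)$; (6) $x'=y^{-1}x$, $y'=y^{-1}$, $w'(s,t)=w(s,1-s-t)^{-1}$; the elements $x',y',w'(s,t)$ satisfy the defining relations of $A$ with $(x,y,w)$ replaced by $(x',y',w')$, and the assignment $x\mapsto x'$, $y\mapsto y'$, $w(s,t)\mapsto w'(s,t)$ defines an involutive algebra isomorphism.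
   Context: Let $(w(s,t))_{s,t\in\mathbb Z}$ be commuting invertible variables. $\mathbb C_w[x,x^{-1},y,y^{-1}]$ is the associative unital $\mathbb C$-algebra generated by $x,x^{-1},y,y^{-1}$ and the $w(s,t)^{\pm1}$ subject to $x^{-1}x=xx^{-1}=1$, $y^{-1}y=yy^{-1}=1$, $yx=w(1,1)xy$, $x\,w(s,t)=w(s+1,t)\,x$, $y\,w(s,t)=w(s,t+1)\,y$ for all $s,t\in\mathbb Z$. *)

(* Defs.v *)
From mathcomp Require Import all_boot all_algebra.
From mathcomp Require Import Rstruct complex.
From Stdlib Require Import Reals.
Set Implicit Arguments. Unset Strict Implicit. Unset Printing Implicit Defensive.
Import GRing.Theory.
Local Open Scope ring_scope.

Definition CC : fieldType := Rdefinitions.R[i].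

Definition is_alg_hom (A B : algType CC) (f : A -> B) : Prop :=
  [/\ forall u v, f (u + v) = f u + f v,
      forall (a : CC) u, f (a *: u) = a *: f u,
      forall u v, f (u * v) = f u * f v &
      f 1 = 1].

(* The defining relations of C_w[x,x^-1,y,y^-1], for data
   x, xi (= x^-1), y, yi (= y^-1), w s t, wi s t (= w(s,t)^-1) in B. *)
Definition qrels (B : algType CC) (x xi y yi : B) (w wi : int -> int -> B) : Prop :=
  (xi * x = 1 /\ x * xi = 1) /\
  (yi * y = 1 /\ y * yi = 1) /\
  (forall s t, w s t * wi s t = 1 /\ wi s t * w s t = 1) /\
  (forall s t s' t', w s t * w s' t' = w s' t' * w s t) /\
  y * x = w 1 1 * x * y /\
  (forall s t, x * w s t = w (s + 1) t * x) /\
  (forall s t, y * w s t = w s (t + 1) * y).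

(* A (with distinguished elements) is the C-algebra presented by the above
   generators and relations: the relations hold in A, and A has the universal
   property of the presentation. *)
Definition is_Cw_Laurent (A : algType CC) (x xi y yi : A) (w wi : int -> int -> A) : Prop :=
  qrels x xi y yi w wi /\
  forall (B : algType CC) (X XI Y YI : B) (W WI : int -> int -> B),
    qrels X XI Y YI W WI ->
    (exists f : A -> B, is_alg_hom f /\
       f x = X /\ f xi = XI /\ f y = Y /\ f yi = YI /\
       (forall s t, f (w s t) = W s t) /\ (forall s t, f (wi s t) = WI s t)) /\
    (forall f g : A -> B, is_alg_hom f -> is_alg_hom g ->
       f x = g x -> f xi = g xi -> f y = g y -> f yi = g yi ->
       (forall s t, f (w s t) = g (w s t)) -> (forall s t, f (wi s t) = g (wi s t)) ->
       forall a, f a = g a).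

Definition defines_involution (A : algType CC) (x y : A) (w : int -> int -> A)
    (x' xi' y' yi' : A) (w' wi' : int -> int -> A) : Prop :=
  qrels x' xi' y' yi' w' wi' /\
  exists f : A -> A,
    is_alg_hom f /\ f x = x' /\ f y = y' /\ (forall s t, f (w s t) = w' s t) /\
    bijective f /\ (forall a, f (f a) = a).

(* Main.v *)
Require Import Defs.
From mathcomp Require Import all_boot all_algebra.
From mathcomp Require Import ring.
Import GRing.Theory.
Local Open Scope ring_scope.

Lemma comm_inv (R : pzRingType) (u v vi : R) :
  v * vi = 1 -> vi * v = 1 -> u * v = v * u -> u * vi = vi * u.
Proof.
move=> h1 h2 h.
by rewrite -[u * vi]mul1r -h2 -mulrA (mulrA v) -h !mulrA -(mulrA _ v) h1 mulr1.
Qed.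

Lemma conj_inv (R : pzRingType) (a u ui u' u'i : R) :
  u * ui = 1 -> u'i * u' = 1 -> a * u = u' * a -> a * ui = u'i * a.
Proof.
move=> h1 h2 h.
by rewrite -[a * ui]mul1r -h2 -mulrA (mulrA u') -h -!mulrA h1 mulr1.
Qed.

Lemma conj_l (R : pzRingType) (a ai u u' : R) :
  a * ai = 1 -> ai * a = 1 -> a * u = u' * a -> ai * u' = u * ai.
Proof.
move=> h1 h2 h.
by rewrite -[ai * u']mulr1 -h1 !mulrA -(mulrA ai u' a) -h !mulrA h2 mul1r.
Qed.

Set Implicit Arguments.

Section ST2.
Context (A : algType CC) (x xi y yi : A) (w wi : int -> int -> A).
Context (H : qrels x xi y yi w wi).

Let hx1 : xi * x = 1. Proof. by case: H => [[]]. Qed.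
Let hx2 : x * xi = 1. Proof. by case: H => [[]]. Qed.
Let hy1 : yi * y = 1. Proof. by case: H => [_ [[]]]. Qed.
Let hy2 : y * yi = 1. Proof. by case: H => [_ [[]]]. Qed.
Let hw1 s t : w s t * wi s t = 1. Proof. by case: H => [_ [_ [/(_ s t) []]]]. Qed.
Let hw2 s t : wi s t * w s t = 1. Proof. by case: H => [_ [_ [/(_ s t) []]]]. Qed.
Let hc a b c d : w a b * w c d = w c d * w a b. Proof. by case: H => [_ [_ [_ [h]]]]. Qed.
Let hyx : y * x = w 1 1 * x * y. Proof. by case: H => [_ [_ [_ [_ [h]]]]]. Qed.
Let hxw s t : x * w s t = w (s + 1) t * x. Proof. by case: H => [_ [_ [_ [_ [_ [h]]]]]]. Qed.
Let hyw s t : y * w s t = w s (t + 1) * y. Proof. by case: H => [_ [_ [_ [_ [_ [_ h]]]]]]. Qed.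

Lemma Lwwi a b c d : w a b * wi c d = wi c d * w a b.
Proof. exact: comm_inv (hw1 _ _) (hw2 _ _) (hc _ _ _ _). Qed.
Lemma Lwiw a b c d : wi a b * w c d = w c d * wi a b.
Proof. by rewrite Lwwi. Qed.
Lemma Lwiwi a b c d : wi a b * wi c d = wi c d * wi a b.
Proof. exact: comm_inv (hw1 _ _) (hw2 _ _) (Lwiw _ _ _ _). Qed.
Lemma Lxwi s t : x * wi s t = wi (s + 1) t * x.
Proof. exact: conj_inv (hw1 _ _) (hw2 _ _) (hxw _ _). Qed.
Lemma Lywi s t : y * wi s t = wi s (t + 1) * y.
Proof. exact: conj_inv (hw1 _ _) (hw2 _ _) (hyw _ _). Qed.
Lemma Lxiw s t : xi * w s t = w (s - 1) t * xi.
Proof. apply: conj_l hx2 hx1 _. by rewrite hxw subrK. Qed.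
Lemma Lxiwi s t : xi * wi s t = wi (s - 1) t * xi.
Proof. apply: conj_l hx2 hx1 _. by rewrite Lxwi subrK. Qed.
Lemma Lyiw s t : yi * w s t = w s (t - 1) * yi.
Proof. apply: conj_l hy2 hy1 _. by rewrite hyw subrK. Qed.
Lemma Lyiwi s t : yi * wi s t = wi s (t - 1) * yi.
Proof. apply: conj_l hy2 hy1 _. by rewrite Lywi subrK. Qed.

Lemma Lxy : x * y = wi 1 1 * y * x.
Proof. by rewrite -mulrA hyx !mulrA hw2 mul1r. Qed.
Lemma Lyxi : y * xi = wi 0 1 * xi * y.
Proof.
rewrite -[y * xi]mul1r -hx1 -!mulrA (mulrA x y) Lxy -!mulrA hx2 mulr1.
by rewrite !mulrA Lxiwi subrr.
Qed.
Lemma Lyix : yi * x = wi 1 0 * x * yi.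
Proof.
rewrite -[yi * x]mulr1 -hy2 !mulrA -(mulrA yi x y) Lxy !mulrA Lyiwi subrr.
by rewrite -(mulrA _ yi y) hy1 mulr1.
Qed.
Lemma Lxiy : xi * y = w 0 1 * y * xi.
Proof. by rewrite -mulrA Lyxi !mulrA hw1 mul1r. Qed.
Lemma Lyixi : yi * xi = w 0 0 * xi * yi.
Proof.
rewrite -[yi * xi]mulr1 -hy2 !mulrA -(mulrA yi xi y) Lxiy !mulrA Lyiw subrr.
by rewrite -(mulrA _ yi y) hy1 mulr1.
Qed.
End ST2.


Lemma hom_id (A : algType CC) : is_alg_hom (fun a : A => a).
Proof. by split. Qed.

Lemma hom_comp (A : algType CC) (f g : A -> A) :
  is_alg_hom f -> is_alg_hom g -> is_alg_hom (fun a => f (g a)).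
Proof.
case=> f1 f2 f3 f4 [g1 g2 g3 g4]; split.
- by move=> u v; rewrite g1 f1.
- by move=> a u; rewrite g2 f2.
- by move=> u v; rewrite g3 f3.
- by rewrite g4 f4.
Qed.

Lemma invol (A : algType CC) (x xi y yi : A) (w wi : int -> int -> A)
  (H : is_Cw_Laurent x xi y yi w wi) (x' xi' y' yi' : A) (w' wi' : int -> int -> A) :
  qrels x' xi' y' yi' w' wi' ->
  (forall f : A -> A, is_alg_hom f -> f x = x' -> f xi = xi' -> f y = y' -> f yi = yi' ->
     (forall s t, f (w s t) = w' s t) -> (forall s t, f (wi s t) = wi' s t) ->
     f x' = x /\ f xi' = xi /\ f y' = y /\ f yi' = yi /\
         (forall s t, f (w' s t) = w s t) /\ (forall s t, f (wi' s t) = wi s t)) ->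
  defines_involution x y w x' xi' y' yi' w' wi'.
Proof.
move=> Q K; split => //.
have [Hq HU] := H.
have [[f [hf [fx [fxi [fy [fyi [fw fwi]]]]]]] _] := HU A x' xi' y' yi' w' wi' Q.
have [gx [gxi [gy [gyi [gw gwi]]]]] := K f hf fx fxi fy fyi fw fwi.
have [_ U] := HU A x xi y yi w wi Hq.
have ff : forall a, f (f a) = a.
  have U2 := U (fun a => f (f a)) (fun a => a) (@hom_comp A f f hf hf) (hom_id A).
  move=> a; apply: U2.
  - by rewrite fx gx.
  - by rewrite fxi gxi.
  - by rewrite fy gy.
  - by rewrite fyi gyi.
  - by move=> s t; rewrite fw gw.
  - by move=> s t; rewrite fwi gwi.
exists f; split=> //; split=> //; split=> //; split=> //; split=> //.
by exists f.
Qed.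


Section ST4.
Context (A : algType CC) (x xi y yi : A) (w wi : int -> int -> A).
Context (H : qrels x xi y yi w wi).

Let hx1 : xi * x = 1. Proof. by case: H => [[]]. Qed.
Let hx2 : x * xi = 1. Proof. by case: H => [[]]. Qed.
Let hy1 : yi * y = 1. Proof. by case: H => [_ [[]]]. Qed.
Let hy2 : y * yi = 1. Proof. by case: H => [_ [[]]]. Qed.
Let hw1 s t : w s t * wi s t = 1. Proof. by case: H => [_ [_ [/(_ s t) []]]]. Qed.
Let hw2 s t : wi s t * w s t = 1. Proof. by case: H => [_ [_ [/(_ s t) []]]]. Qed.
Let hc a b c d : w a b * w c d = w c d * w a b. Proof. by case: H => [_ [_ [_ [h]]]]. Qed.
Let hyx : y * x = w 1 1 * x * y. Proof. by case: H => [_ [_ [_ [_ [h]]]]]. Qed.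
Let hxw s t : x * w s t = w (s + 1) t * x. Proof. by case: H => [_ [_ [_ [_ [_ [h]]]]]]. Qed.
Let hyw s t : y * w s t = w s (t + 1) * y. Proof. by case: H => [_ [_ [_ [_ [_ [_ h]]]]]]. Qed.

Lemma inv2 (a ai b bi : A) : a * ai = 1 -> ai * a = 1 -> b * bi = 1 -> bi * b = 1 ->
  (ai * b) * (bi * a) = 1.
Proof. by move=> h1 h2 h3 h4; rewrite mulrA -(mulrA ai) h3 mulr1 h2. Qed.

Ltac inv := first [ exact: hx1 | exact: hx2 | exact: hy1 | exact: hy2 | exact: hw1 | exact: hw2
  | apply: inv2; first [exact: hx1 | exact: hx2 | exact: hy1 | exact: hy2]].

Ltac pre := split; [split; inv|]; split; [split; inv|];
  split; [move=> s t /=; split; inv|];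
  split; [move=> *; first [exact: (Lwiwi H) | exact: hc]|].

Lemma q1 : qrels y yi x xi (fun s t => wi t s) (fun s t => w t s).
Proof.
pre. split; [exact: (Lxy H)|]. split=> s t /=; [exact: (Lywi H) | exact: (Lxwi H)].
Qed.

Lemma q2 : qrels xi x y yi (fun s t => wi (1 - s) t) (fun s t => w (1 - s) t).
Proof.
pre. split; [by rewrite (Lyxi H) subrr|]. split=> s t /=.
- rewrite (Lxiwi H); congr (wi _ _ * _); ring.
- exact: (Lywi H).
Qed.

Lemma q3 : qrels xi x (xi * y) (yi * x) (fun s t => wi (1 - s - t) t) (fun s t => w (1 - s - t) t).
Proof.
pre.
split; first by rewrite -mulrA (Lyxi H) !mulrA (Lxiwi H) subrr.
split=> s t /=.
- rewrite (Lxiwi H); congr (wi _ _ * _); ring.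
- rewrite -mulrA (Lywi H) mulrA (Lxiwi H) mulrA; congr (wi _ _ * _ * _); ring.
Qed.

Lemma q4 : qrels x xi yi y (fun s t => wi s (1 - t)) (fun s t => w s (1 - t)).
Proof.
pre. split; [by rewrite (Lyix H)|]. split=> s t /=.
- exact: (Lxwi H).
- rewrite (Lyiwi H); congr (wi _ _ * _); ring.
Qed.

Lemma q5 : qrels xi x yi y (fun s t => w (1 - s) (1 - t)) (fun s t => wi (1 - s) (1 - t)).
Proof.
pre. split; [by rewrite (Lyixi H) !subrr|]. split=> s t /=.
- rewrite (Lxiw H); congr (w _ _ * _); ring.
- rewrite (Lyiw H); congr (w _ _ * _); ring.
Qed.

Lemma q6 : qrels (yi * x) (xi * y) yi y (fun s t => wi s (1 - s - t)) (fun s t => w s (1 - s - t)).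
Proof.
pre.
split.
  rewrite /= !mulrA -(mulrA yi yi x) (Lyix H) !mulrA (Lyiwi H); congr (wi _ _ * _ * _ * _); ring.
split=> s t /=.
- rewrite -mulrA (Lxwi H) mulrA (Lyiwi H) mulrA; congr (wi _ _ * _ * _); ring.
- rewrite (Lyiwi H); congr (wi _ _ * _); ring.
Qed.
End ST4.

Unset Implicit Arguments.

Ltac kt hx1 hx2 hy1 hy2 :=
  let f1 := fresh in let f2 := fresh in let f3 := fresh in let f4 := fresh in
  let fx := fresh in let fxi := fresh in let fy := fresh in let fyi := fresh in
  let fw := fresh in let fwi := fresh in
  move=> ? [f1 f2 f3 f4] fx fxi fy fyi fw fwi;
  split; [|split; [|split; [|split; [|split]]]]; try move=> s t;
  rewrite /= ?f3 ?fx ?fxi ?fy ?fyi ?fw ?fwi /=;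
  first [ done
        | by rewrite mulrA ?hx1 ?hx2 ?hy1 ?hy2 mul1r
        | by rewrite -mulrA ?hx1 ?hx2 ?hy1 ?hy2 mulr1
        | f_equal; ring ].

Theorem lemma1 (A : algType CC) (x xi y yi : A) (w wi : int -> int -> A) :
  is_Cw_Laurent x xi y yi w wi ->
  (
   defines_involution x y w y yi x xi
     (fun s t => wi t s) (fun s t => w t s) /\
   defines_involution x y w xi x y yi
     (fun s t => wi (1 - s) t) (fun s t => w (1 - s) t) /\
   defines_involution x y w xi x (xi * y) (yi * x)
     (fun s t => wi (1 - s - t) t) (fun s t => w (1 - s - t) t) /\
   defines_involution x y w x xi yi y
     (fun s t => wi s (1 - t)) (fun s t => w s (1 - t)) /\
   defines_involution x y w xi x yi y
     (fun s t => w (1 - s) (1 - t)) (fun s t => wi (1 - s) (1 - t)) /\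
   defines_involution x y w (yi * x) (xi * y) yi y
     (fun s t => wi s (1 - s - t)) (fun s t => w s (1 - s - t))).
Proof.
move=> H; have Hq := H.1.
have [[hx1 hx2] [[hy1 hy2] _]] := Hq.
split; [apply: (invol H (q1 Hq)); kt hx1 hx2 hy1 hy2|].
split; [apply: (invol H (q2 Hq)); kt hx1 hx2 hy1 hy2|].
split; [apply: (invol H (q3 Hq)); kt hx1 hx2 hy1 hy2|].
split; [apply: (invol H (q4 Hq)); kt hx1 hx2 hy1 hy2|].
split; [apply: (invol H (q5 Hq)); kt hx1 hx2 hy1 hy2|].
apply: (invol H (q6 Hq)); kt hx1 hx2 hy1 hy2.
Qed.
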